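(* Fix integers $k \ge 3$ and $i \in \{2,\dots,k-1\}$, and let $T = \{1,\dots,k\}\setminus\{i\} \subset \mathbb{Z}$. There exists a number $\ell \ge 1$ such that for any set $C$ with $|C| \ge \ell$ there is a set $X \subset \mathbb{Z} \times C$ satisfying: (a) $X$ is a union of pairwise disjoint sets of the form $(T+n)\times\{c\}$ with $n \in \mathbb{Z}$ and $c \in C$; (b) $|(\{n\}\times C)\cap X| \equiv 1 \pmod{k-1}$ for every $n \in \mathbb{Z}$. *)

(* Defs.v *)
From mathcomp Require Import all_boot all_order all_algebra.
Set Implicit Arguments. Unset Strict Implicit. Unset Printing Implicit Defensive.
Import Order.TTheory GRing.Theory Num.Theory.

Local Open Scope ring_scope.

Definition inT (k i : nat) (t : int) : Prop :=
  (1 <= t)%R /\ (t <= k%:Z)%R /\ t <> i%:Z.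

(* A subset X of Z x C is represented by its columns: X n = {c | (n,c) \in X}.
   A family of tiles (T+n) x {c} is represented by P : int -> {set C}
   (c \in P n  <=>  the tile (T+n) x {c} is used). *)

Definition tiled_by (k i : nat) (C : finType) (X P : int -> {set C}) : Prop :=
  (forall (m : int) (c : C),
      c \in X m <-> exists n : int, c \in P n /\ inT k i (m - n)%R) /\
  (forall (c : C) (n n' : int), c \in P n -> c \in P n' -> n <> n' ->
      forall m : int, ~ (inT k i (m - n)%R /\ inT k i (m - n')%R)).

Definition columns_ok (k : nat) (C : finType) (X : int -> {set C}) : Prop :=
  forall n : int, #|X n| = 1 %[mod k.-1].

(* Main.v *)
Require Import Defs.
From mathcomp Require Import all_boot all_order all_algebra zify.
Import Order.TTheory GRing.Theory Num.Theory.
Local Open Scope ring_scope.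

Definition mu (k : nat) (z : int) : nat :=
  if (0 <= z) && (z <= (k.-2)%:Z) then 0%N else absz z.

Fixpoint cf (k i f : nat) (z : int) : nat :=
  match f with
  | 0 => 0%N
  | f'.+1 =>
    if (0 <= z) && (z <= (k.-2)%:Z) then 0%N
    else if 0 <= z then
      ((1 + k.-2 * \sum_(t < k.+1 | (2 <= t)%N && (t != i :> nat)) cf k i f' (z + 1 - t%:Z)) %% k.-1)%N
    else
      ((1 + k.-2 * \sum_(t < k.+1 | [&& (1 <= t)%N, (t < k)%N & (t != i :> nat)]) cf k i f' (z + k%:Z - t%:Z)) %% k.-1)%N
  end.

Lemma mu_fwd (k : nat) (z : int) (t : nat) : (3 <= k)%N -> 0 <= z -> ~~ (z <= (k.-2)%:Z) ->
  (2 <= t)%N -> (t <= k)%N -> (mu k (z + 1 - t%:Z) < mu k z)%N.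
Proof.
move=> hk hz hz2 ht1 ht2; rewrite /mu hz /= (negbTE hz2).
case: ifP => _; lia.
Qed.

Lemma mu_bwd (k : nat) (z : int) (t : nat) : (3 <= k)%N -> z < 0 ->
  (1 <= t)%N -> (t < k)%N -> (mu k (z + k%:Z - t%:Z) < mu k z)%N.
Proof.
move=> hk hz ht1 ht2; rewrite /mu.
have -> : (0 <= z) = false by lia.
case: ifP => /= h; first by lia.
have hw : z + k%:Z - t%:Z < 0.
  apply: contraFT h; rewrite -leNgt => h0; rewrite h0 /=; lia.
lia.
Qed.

Lemma cf_fuel k i (hk : (3 <= k)%N) f : forall g z, (mu k z < f)%N -> (mu k z < g)%N -> cf k i f z = cf k i g z.
Proof.
elim: f => [|f IH] [|g] z //= hf hg.
case: ifP => // hb; case: ifP => hz.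
  congr (_ %% _)%N; congr (1 + _ * _)%N; apply: eq_bigr => t /andP[ht _].
  have hz2 : ~~ (z <= (k.-2)%:Z) by move: hb; rewrite hz /= => ->.
  have := @mu_fwd k z t hk hz hz2 ht (ltn_ord t : (t < k.+1)%N).
  move=> hm; apply: IH; lia.
congr (_ %% _)%N; congr (1 + _ * _)%N; apply: eq_bigr => t /and3P[ht1 ht2 _].
have hz' : z < 0 by rewrite ltNge hz.
have := @mu_bwd k z t hk hz' ht1 ht2.
move=> hm; apply: IH; lia.
Qed.

Definition cc (k i : nat) (z : int) : nat := cf k i (mu k z).+1 z.

Lemma cc_lt k i (hk : (3 <= k)%N) z : (cc k i z < k.-1)%N.
Proof.
rewrite /cc /=; case: ifP => _; first lia.
by case: ifP => _; rewrite ltn_mod; lia.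
Qed.

Lemma cc_fwd k i (hk : (3 <= k)%N) z : (k.-1)%:Z <= z ->
  cc k i z = ((1 + k.-2 * \sum_(t < k.+1 | (2 <= t)%N && (t != i :> nat)) cc k i (z + 1 - t%:Z)) %% k.-1)%N.
Proof.
move=> hz; rewrite /cc /=.
have hz0 : 0 <= z by lia.
have hz2 : (z <= (k.-2)%:Z) = false by lia.
rewrite hz0 hz2 /=; congr (_ %% _)%N; congr (1 + _ * _)%N.
apply: eq_bigr => t /andP[ht _].
have := @mu_fwd k z t hk hz0 (negbT hz2) ht (ltn_ord t : (t < k.+1)%N).
move=> hm; rewrite (@cf_fuel k i hk (mu k z) (mu k (z + 1 - t%:Z)).+1) //; lia.
Qed.

Lemma cc_bwd k i (hk : (3 <= k)%N) z : z < 0 ->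
  cc k i z = ((1 + k.-2 * \sum_(t < k.+1 | [&& (1 <= t)%N, (t < k)%N & (t != i :> nat)]) cc k i (z + k%:Z - t%:Z)) %% k.-1)%N.
Proof.
move=> hz; rewrite /cc /=.
have hz0 : (0 <= z) = false by lia.
rewrite hz0 /=; congr (_ %% _)%N; congr (1 + _ * _)%N.
apply: eq_bigr => t /and3P[ht1 ht2 _].
have := @mu_bwd k z t hk hz ht1 ht2.
move=> hm; rewrite (@cf_fuel k i hk (mu k z) (mu k (z + k%:Z - t%:Z)).+1) //; lia.
Qed.

Lemma cc_key k i (hk : (3 <= k)%N) (hi1 : (2 <= i)%N) (hi2 : (i <= k.-1)%N) (m : int) :
  ((\sum_(t < k.+1 | (1 <= t)%N && (t != i :> nat)) cc k i (m - t%:Z)) %% k.-1 = 1)%N.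
Proof.
have hK : k.-1 = (k.-2).+1 by lia.
have fin : forall S : nat, ((((1 + k.-2 * S) %% k.-1) + S) %% k.-1 = 1)%N.
  move=> S; rewrite modnDml -addnA -mulSnr -hK addnC mulnC modnMDl modn_small //; lia.
case: (lerP (k%:Z) m) => hm.
  have h1 : (1 < k.+1)%N by lia.
  rewrite (bigD1 (Ordinal h1)) /=; last first.
    by apply/eqP; lia.
  rewrite (@cc_fwd k i hk (m - 1)); last by lia.
  set S := (\sum_(t < k.+1 | _) cc k i (m - 1 + 1 - _))%N.
  suff -> : (\sum_(i0 < k.+1 | (1 <= i0)%N && (i0 != i :> nat) && (i0 != Ordinal h1)) cc k i (m - i0%:Z))%N = S by apply: fin.
  rewrite /S; apply: eq_big => t.
    apply/idP/idP.
      move=> /andP[/andP[a b] c]; apply/andP; split => //.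
      have : (nat_of_ord t != 1)%N by apply: contraNneq c => e; apply/eqP/val_inj.
      lia.
    move=> /andP[a b]; apply/andP; split; first (apply/andP; split => //; lia).
    apply/eqP => e; move: a; rewrite e /=; lia.
  by move=> _; congr (cc k i _); lia.
have h1 : (k < k.+1)%N by lia.
rewrite (bigD1 (Ordinal h1)) /=; last first.
  by apply/andP; split; [lia| apply/eqP; lia].
rewrite (@cc_bwd k i hk (m - k%:Z)); last by lia.
set S := (\sum_(t < k.+1 | _) cc k i (m - k%:Z + k%:Z - _))%N.
suff -> : (\sum_(i0 < k.+1 | (1 <= i0)%N && (i0 != i :> nat) && (i0 != Ordinal h1)) cc k i (m - i0%:Z))%N = S by apply: fin.
rewrite /S; apply: eq_big => t.
  apply/idP/idP.
    move=> /andP[/andP[a b] c]; apply/and3P; split => //.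
    have : (nat_of_ord t != k)%N by apply: contraNneq c => e; apply/eqP/val_inj.
    have := ltn_ord t; lia.
  move=> /and3P[a b c]; apply/andP; split; first (apply/andP; split => //).
  apply/eqP => e; move: b; rewrite e /=; lia.
by move=> _; congr (cc k i _); lia.
Qed.

Lemma modk_inj (a b : int) (k:nat) : (0 < k)%N -> (a %% k)%Z = (b %% k)%Z -> a - b < k%:Z -> b - a < k%:Z -> a = b.
Proof. move=> hk hm h1 h2.
have ea := divz_eq a k%:Z. have eb := divz_eq b k%:Z.
rewrite hm in ea.
move: ea eb. set qa := (a %/ k)%Z. set qb := (b %/ k)%Z. set r := (b %% k)%Z.
move=> ea eb.
have : qa = qb.
  have hk' : (0 < k%:Z) by [].
  clear hm. 
  nia.
by move=> e; rewrite ea eb e. Qed.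

Lemma card_bigcup_disj (T J : finType) (p : pred J) (F : J -> {set T}) :
  (forall j j', p j -> p j' -> j != j' -> [disjoint F j & F j']) ->
  #|\bigcup_(j | p j) F j| = (\sum_(j | p j) #|F j|)%N.
Proof.
move=> dis.
rewrite -sum1_card big_mkcond /=.
transitivity (\sum_(c : T) \sum_(j | p j) ((c \in F j) : nat))%N.
  apply: eq_bigr => c _; case: (boolP (c \in \bigcup_(j | p j) F j)) => h.
    case/bigcupP: h => j0 pj0 cj0; rewrite (bigD1 j0) //= cj0 big1 //.
    move=> j /andP[pj nj]; by rewrite (disjointFl (dis _ _ pj pj0 nj) cj0).
  rewrite big1 // => j pj; apply/eqP; rewrite eqb0; apply: contraNN h => cj.
  by apply/bigcupP; exists j.
rewrite exchange_big; apply: eq_bigr => j _; rewrite -sum1_card [RHS]big_mkcond; apply: eq_bigr => c _; by case: (c \in F j).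
Qed.

Lemma card_lt_ord (K c : nat) : (c <= K)%N -> #|[set j : 'I_K | (j < c)%N]| = c.
Proof.
move=> hc.
have inj : injective (@widen_ord c K hc) by move=> x y /(congr1 val) /= e; apply: val_inj.
have -> : [set j : 'I_K | (j < c)%N] = (@widen_ord c K hc) @: [set: 'I_c].
  apply/setP => j; rewrite inE; apply/idP/imsetP.
    by move=> h; exists (Ordinal h) => //; apply: val_inj.
  by case=> j' _ ->; rewrite /= ltn_ord.
by rewrite card_imset // cardsT card_ord.
Qed.

Theorem lemma7 (k i : nat) (hk : (3 <= k)%N) (hi1 : (2 <= i)%N) (hi2 : (i <= k.-1)%N) :
  exists l : nat, (1 <= l)%N /\
    forall C : finType, (l <= #|C|)%N ->
      exists X P : int -> {set C}, tiled_by k i X P /\ columns_ok k X.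
Proof.
exists (k * k.-1)%N; split; first by rewrite muln_gt0; lia.
move=> C hC.
pose I := ('I_k * 'I_k.-1)%type.
have hI : (#|{: I}| <= #|C|)%N by rewrite card_prod !card_ord.
pose phi (x : I) : C := enum_val (widen_ord hI (enum_rank x)).
have phi_inj : injective phi.
  move=> x y /enum_val_inj /(congr1 val) /= e; apply: enum_rank_inj; exact: val_inj.
pose A (n : int) := [set x : I | ((n %% k)%Z == (x.1 : nat)%:Z) && (x.2 < cc k i n)%N].
pose P (n : int) := phi @: A n.
pose X (m : int) := \bigcup_(t < k.+1 | (1 <= t)%N && (t != i :> nat)) P (m - t%:Z).
have hk0 : (0 < k)%N by lia.
have Pres : forall n c, c \in P n -> forall n' , c \in P n' -> (n %% k)%Z = (n' %% k)%Z.
  move=> n c /imsetP[x xA ->] n' /imsetP[y yA /phi_inj e]; subst y.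
  move: xA yA; rewrite !inE => /andP[/eqP -> _] /andP[/eqP -> _] //.
exists X, P; split; [split|].
- move=> m c; split.
    case/bigcupP => t /andP[t1 ti] ct; exists (m - t%:Z); split => //.
    have := ltn_ord t; rewrite /inT; move: ti => /eqP ti; split; [lia|split; [lia|]].
    move=> e; apply: ti; lia.
  case=> n [cn [h1 [h2 h3]]].
  have ht : (absz (m - n) < k.+1)%N by lia.
  apply/bigcupP; exists (Ordinal ht).
    rewrite /=; apply/andP; split; [lia| apply/eqP => e; apply: h3; lia].
  by have -> : m - (Ordinal ht : nat)%:Z = n by rewrite /=; lia.
- move=> c n n' cn cn' nn' m [[a1 [a2 _]] [b1 [b2 _]]].
  apply: nn'; apply: (@modk_inj n n' k hk0 (Pres _ _ cn _ cn')); lia.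
- move=> m; rewrite /X card_bigcup_disj.
    have -> : (\sum_(t < k.+1 | (1 <= t)%N && (t != i :> nat)) #|P (m - t%:Z)%R|)%N =
              (\sum_(t < k.+1 | (1 <= t)%N && (t != i :> nat)) cc k i (m - t%:Z))%N.
      apply: eq_bigr => t _; rewrite /P card_imset //.
      set n := m - t%:Z.
      have hr : (absz (n %% k)%Z < k)%N.
        have := @ltz_pmod n k%:Z; have := @modz_ge0 n k%:Z; lia.
      have -> : A n = setX [set Ordinal hr] [set j : 'I_k.-1 | (j < cc k i n)%N].
        apply/setP => -[r j]; rewrite !inE /=; congr (_ && _).
        apply/eqP/eqP => [e|->].
          apply: val_inj => /=; lia.
        have h0 : 0 <= (n %% k)%Z by apply: modz_ge0; rewrite eqz_nat; lia.
        by rewrite /= abszE ger0_norm.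
      rewrite cardsX cards1 mul1n card_lt_ord //.
      by have := @cc_lt k i hk n; lia.
    rewrite (@cc_key k i hk hi1 hi2 m) modn_small //; lia.
  move=> t t' /andP[t1 _] /andP[t1' _] ne.
  rewrite -setI_eq0; apply/eqP/setP => c; rewrite !inE.
  apply/negP => /andP[ct ct'].
  have := Pres _ _ ct _ ct' => e.
  have := @modk_inj (m - t%:Z) (m - t'%:Z) k hk0 e.
  have := ltn_ord t; have := ltn_ord t' => l1 l2 h.
  have : (m - t%:Z) = (m - t'%:Z) by apply: h; lia.
  move=> e2; move/eqP: ne; apply; apply: val_inj => /=; lia.
Qed.
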